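(* Let $G$ be a graph, $k,\ell\ge1$, and let $J_0,J_1,\dots,J_\ell$ be independent sets of $G$ with $J_0=S$, where $S$ is an independent set of size $k$. Define collections $\mathcal{C}_0,\dots,\mathcal{C}_\ell$ of constraint sets as follows: $\mathcal{C}_0=\{\{(S,k)\}\}$; for $i\in\{1,\dots,\ell\}$, $\mathcal{C}_i$ contains, for every $C\in\mathcal{C}_{i-1}$ and every constraint $(X,b)\in C$, the constraint set $C'$ consisting of: $(N(X)\cap J_i,1)$; $(X\cap J_i,b-1)$ if $b\ge2$ (nothing if $b=1$); and $(X'\cap J_i,b')$ for every other constraint $(X',b')\in C$. Then for every $i\in\{0,\dots,\ell\}$ and every $C\in\mathcal{C}_i$, the vertex sets $X$ of the constraints $(X,b)\in C$ are pairwise disjoint.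
   Context: A constraint is a pair $(X,b)$ with $X\subseteq V(G)$ and $b$ a positive integer. Constraint sets and the collections $\mathcal{C}_i$ are taken with multiplicity (one constraint set $C'$ per pair $(C,(X,b))$, and one entry per constraint). For $X\subseteq V(G)$, $N(X)=\{v\notin X: v\text{ adjacent to some }u\in X\}$. In the paper, $J_1,\dots,J_{\ell}$ are members of an independence covering family for $(G,k)$ (a family of independent sets such that every independent set of size at most $k$ is contained in a member), with $J_\ell=T$ another independent set of size $k$. *)

(* Defs.v *)
From mathcomp Require Import all_boot.
Set Implicit Arguments. Unset Strict Implicit. Unset Printing Implicit Defensive.

Section Constraints.
Variables (V : finType) (e : rel V).

Definition simple_graph := symmetric e /\ irreflexive e.

Definition independent (J : {set V}) : Prop :=
  forall u v, u \in J -> v \in J -> ~~ e u v.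

Definition nbh (X : {set V}) : {set V} :=
  [set v | (v \notin X) && [exists u in X, e u v]].

(* a constraint (X,b); constraint sets are sequences (with multiplicity) *)
Definition constraint := ({set V} * nat)%type.
Definition cdef : constraint := (set0, 0).

Definition refine (Ji : {set V}) (C : seq constraint) (j : nat) : seq constraint :=
  let Xb := nth cdef C j in
  (nbh Xb.1 :&: Ji, 1)
    :: (if 2 <= Xb.2 then [:: (Xb.1 :&: Ji, Xb.2 - 1)] else [::])
    ++ [seq (c.1 :&: Ji, c.2) | c <- take j C ++ drop j.+1 C].

Definition step (Ji : {set V}) (Cs : seq (seq constraint)) : seq (seq constraint) :=
  flatten [seq [seq refine Ji C j | j <- iota 0 (size C)] | C <- Cs].

Fixpoint coll (S : {set V}) (k : nat) (J : nat -> {set V}) (i : nat)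
  : seq (seq constraint) :=
  match i with
  | 0 => [:: [:: (S, k)]]
  | i'.+1 => step (J i) (coll S k J i')
  end.

End Constraints.

(* Main.v *)
Require Import Defs.
From mathcomp Require Import all_boot.
Set Implicit Arguments. Unset Strict Implicit.

Section Proof.
Variables (V : finType) (e : rel V).

Lemma disjointP (A B : {set V}) :
  reflect (forall x, x \in A -> x \in B -> False) [disjoint A & B].
Proof.
rewrite disjoints_subset; apply: (iffP subsetP) => H x xA.
  by move=> xB; have := H x xA; rewrite inE xB.
by rewrite inE; apply/negP => xB; exact: H x xA xB.
Qed.

Definition disj (c d : constraint V) := [disjoint c.1 & d.1].

Lemma disjI (A B J : {set V}) : [disjoint A & B] -> [disjoint A :&: J & B :&: J].
Proof.
move/disjointP=> H; apply/disjointP=> x; rewrite !inE => /andP[xA _] /andP[xB _].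
exact: H xA xB.
Qed.

Lemma disj_nbhX (X J : {set V}) : [disjoint nbh e X :&: J & X :&: J].
Proof.
apply/disjointP=> x; rewrite !inE => /andP[/andP[xX _] _] /andP[xX' _].
by rewrite xX' in xX.
Qed.

Lemma disj_nbh (X Y J0 J : {set V}) : independent e J0 -> X \subset J0 -> Y \subset J0 ->
  [disjoint nbh e X :&: J & Y :&: J].
Proof.
move=> Hind XJ YJ; apply/disjointP=> x; rewrite !inE => /andP[/andP[_ /existsP[u /andP[uX eux]]] _] /andP[xY _].
have := Hind u x (subsetP XJ u uX) (subsetP YJ x xY).
by rewrite eux.
Qed.

Lemma key (J0 J1 : {set V}) (C : seq (constraint V)) (j : nat) :
  independent e J0 -> all (fun c : constraint V => c.1 \subset J0) C -> pairwise disj C -> j < size C ->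
  all (fun c : constraint V => c.1 \subset J1) (refine e J1 C j) && pairwise disj (refine e J1 C j).
Proof.
move=> Hind Hall Hpw Hj.
rewrite /refine.
set X := nth (cdef V) C j.
set s1 := take j C; set s2 := drop j.+1 C.
have HC : C = s1 ++ X :: s2 by rewrite /s1 /s2 /X -drop_nth // cat_take_drop.
rewrite HC all_cat /= pairwise_cat pairwise_cons allrel_consr in Hall Hpw.
move: Hall Hpw => /and3P[A1 XJ0 A2] /and4P[/andP[R1 R12] P1 R2 P2].
have Prest : pairwise disj (s1 ++ s2) by rewrite pairwise_cat R12 P1 P2.
have Arest : all (fun c : constraint V => c.1 \subset J0) (s1 ++ s2) by rewrite all_cat A1 A2.
have Drest : all (disj X) (s1 ++ s2).
  rewrite all_cat R2 andbT; apply: sub_all R1 => c; by rewrite /disj disjoint_sym.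
move: Prest Arest Drest; set rest := s1 ++ s2 => Prest Arest Drest.
apply/andP; split.
  rewrite /= subsetIr /= all_cat; apply/andP; split.
    by case: (2 <= X.2) => //=; rewrite subsetIr.
  by rewrite all_map; apply/allP => c _ /=; rewrite subsetIr.
rewrite pairwise_cons all_cat pairwise_cat pairwise_map.
apply/andP; split.
  apply/andP; split.
    by case: (2 <= X.2) => //=; rewrite /disj /= disj_nbhX.
  rewrite all_map; apply/allP => c cin /=.
  rewrite /disj /=; apply: disj_nbh Hind XJ0 _.
  exact: (allP Arest c cin).
apply/and3P; split.
- case: (2 <= X.2) => //=; rewrite allrel1l all_map.
  apply/allP => c cin /=; rewrite /disj /=; apply: disjI.
  exact: (allP Drest c cin).
- by case: (2 <= X.2).
- apply: sub_pairwise Prest => c d; rewrite /disj /=; exact: disjI.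
Qed.

Lemma inv (S : {set V}) k (J : nat -> {set V}) l :
  J 0 = S -> (forall i, i <= l -> independent e (J i)) ->
  forall i, i <= l -> forall C, C \in coll e S k J i ->
  all (fun c : constraint V => c.1 \subset J i) C && pairwise disj C.
Proof.
move=> HS Hind; elim=> [|i IH] Hi C /=.
  by rewrite inE => /eqP ->; rewrite /= HS subxx.
move=> /flattenP[s /mapP[C0 C0in ->] /mapP[j]]; rewrite mem_iota add0n => /andP[_ Hj] ->.
have /andP[H1 H2] := IH (ltnW Hi) C0 C0in.
exact: key (Hind i (ltnW Hi)) H1 H2 Hj.
Qed.

End Proof.

Theorem lemma3p3 (V : finType) (e : rel V) (k l : nat)
  (S : {set V}) (J : nat -> {set V}) :
  simple_graph e -> 1 <= k -> 1 <= l ->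
  independent e S -> #|S| = k -> J 0 = S ->
  (forall i, i <= l -> independent e (J i)) ->
  forall i, i <= l ->
  forall C, C \in coll e S k J i ->
  forall p q, p < size C -> q < size C -> p != q ->
  [disjoint (nth (cdef V) C p).1 & (nth (cdef V) C q).1].
Proof.
move=> _ _ _ _ _ HS Hind i Hi C HC p q Hp Hq Hpq.
have /andP[_ /(pairwiseP (cdef V)) Hpw] := inv HS Hind Hi HC.
case: (ltngtP p q) Hpq => // Hlt _.
  exact: Hpw.
rewrite disjoint_sym; exact: Hpw.
Qed.
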